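(* Under the hypotheses of Theorem 7 (connected $G$, edge $e=(i,j)$, $i\ne j$, $a_{ij}>0$, $v=e_i-e_j$, $\widehat A=A+a_{ij}vv^T$), let $\lambda_1\ge\lambda_2\ge\dots\ge\lambda_n$ and $\widehat\lambda_1\ge\widehat\lambda_2\ge\dots\ge\widehat\lambda_n$ be the eigenvalues of $P=D^{-1}A$ and of $\widehat P=D^{-1}\widehat A$ respectively (these are real). Then for every $\ell=1,\dots,n$, \[ \lambda_\ell\le\widehat\lambda_\ell\le\lambda_\ell+a_{ij}\big(d_i^{-1}+d_j^{-1}\big). \]
   Context: Graphs are undirected and possibly weighted on vertex set $\{1,\dots,n\}$, with symmetric nonnegative adjacency matrix $A=(a_{k\ell})$; $d=A\mathbf 1$ (all entries assumed positive), $D=\mathrm{diag}(d)$; $e_k$ is the $k$-th column of the identity and $\mathbf 1$ the all-ones vector. Note $\widehat A\mathbf 1=d$, so $D$ is also the degree matrix of $\widehat A$. *)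

(* Defs.v *)
From HB Require Import structures.
From mathcomp Require Import all_boot all_order all_algebra.
From mathcomp Require Import reals.
Set Implicit Arguments. Unset Strict Implicit. Unset Printing Implicit Defensive.
Import Order.TTheory GRing.Theory Num.Theory.
Local Open Scope ring_scope.

Definition degvec (R : realType) (n : nat) (A : 'M[R]_n) : 'cV[R]_n :=
  A *m const_mx 1.

Definition degmx (R : realType) (n : nat) (A : 'M[R]_n) : 'M[R]_n :=
  diag_mx (degvec A)^T.

Definition evec (R : realType) (n : nat) (k : 'I_n) : 'cV[R]_n :=
  delta_mx k 0.

Definition graph_connected (R : realType) (n : nat) (A : 'M[R]_n) : Prop :=
  forall k l : 'I_n, connect (fun x y : 'I_n => 0 < A x y) k l.

Definition eigenvalues_desc (R : realType) (n : nat) (M : 'M[R]_n)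
  (lam : 'I_n -> R) : Prop :=
  (forall k l : 'I_n, (k <= l)%N -> lam l <= lam k) /\
  char_poly M = \prod_(k < n) ('X - (lam k)%:P).

(* Main.v *)
Require Import Defs.
From HB Require Import structures.
From mathcomp Require Import all_boot all_order all_algebra.
From mathcomp Require Import reals complex spectral zify ring.
Set Implicit Arguments. Unset Strict Implicit. Unset Printing Implicit Defensive.
Import Order.TTheory GRing.Theory Num.Theory.
Local Open Scope ring_scope.
Local Open Scope sesquilinear_scope.

Lemma char_poly_sim (R : comNzRingType) n (P A Q : 'M[R]_n) :
  P *m Q = 1%:M -> Q *m P = 1%:M -> char_poly (P *m A *m Q) = char_poly A.
Proof.
move=> PQ QP; rewrite /char_poly.
have e (M N : 'M[R]_n) : map_mx polyC (M *m N) = map_mx polyC M *m map_mx polyC N.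
  exact: map_mxM.
have -> : char_poly_mx (P *m A *m Q) =
   map_mx polyC P *m char_poly_mx A *m map_mx polyC Q.
  rewrite /char_poly_mx mulmxBr mulmxBl !e.
  rewrite -mulmxA scalar_mxC mulmxA; congr (_ - _).
  by rewrite -mulmxA -e PQ map_mx1 mulmx1.
by rewrite !det_mulmx mulrC mulrA -det_mulmx -e QP map_mx1 det1 mul1r.
Qed.

Section Weyl.
Variable C : numClosedFieldType.

Definition qf n (M : 'M[C]_n) (x : 'rV[C]_n) : C := (x *m M *m x^t*) 0 0.

Lemma unitary_tl n (P : 'M[C]_n) : P \is unitarymx -> P^t* *m P = 1%:M.
Proof.
move=> uP; rewrite -invmx_unitary //; exact: mulVmx (unitarymx_unit uP).
Qed.

Lemma unitary_tr n (P : 'M[C]_n) : P \is unitarymx -> P *m P^t* = 1%:M.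
Proof. by move/unitarymxP. Qed.

Lemma qf_diag n (P : 'M[C]_n) (X : 'rV[C]_n) (x : 'rV[C]_n) :
  P \is unitarymx ->
  qf (invmx P *m diag_mx X *m P) x =
  \sum_k `|(x *m P^t*) 0 k| ^+ 2 * X 0 k.
Proof.
move=> uP; rewrite /qf invmx_unitary //.
have -> : x *m (P^t* *m diag_mx X *m P) *m x^t* =
    (x *m P^t*) *m diag_mx X *m (x *m P^t*)^t*.
  by rewrite trmx_mul map_mxM trmxCK !mulmxA.
rewrite mxE; apply: eq_bigr => k _.
by rewrite mul_mx_diag !mxE normCK mulrAC.
Qed.


Lemma qf1E n (x : 'rV[C]_n) : qf 1%:M x = dotmx x x.
Proof. by rewrite /qf mulmx1 dotmxE. Qed.

Lemma qf1_diag n (P : 'M[C]_n) (x : 'rV[C]_n) :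
  P \is unitarymx -> qf 1%:M x = \sum_k `|(x *m P^t*) 0 k| ^+ 2.
Proof.
move=> uP; have -> : (1%:M : 'M[C]_n) = invmx P *m diag_mx (const_mx 1) *m P.
  by rewrite diag_const_mx mulmx1 mulVmx // unitarymx_unit.
rewrite qf_diag //; apply: eq_bigr => k _; by rewrite [const_mx _ _ _]mxE mulr1.
Qed.

Definition sel n (I : {set 'I_n}) : 'I_(#|I|) -> 'I_n := fun a => @enum_val _ (pred_of_set I) a.

Arguments sel {n} I a.
Lemma sel_in n (I : {set 'I_n}) a : sel I a \in I.
Proof. exact: enum_valP. Qed.

Lemma sel_inj n (I : {set 'I_n}) : injective (sel I).
Proof. exact: enum_val_inj. Qed.

Lemma rank_sel n (P : 'M[C]_n) (I : {set 'I_n}) :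
  P \is unitarymx -> \rank (rowsub (sel I) P) = #|I|.
Proof.
move=> uP; apply: mxrank_unitary; apply/row_unitarymxP => a b.
rewrite !row_rowsub; move/row_unitarymxP: uP => ->.
by rewrite inj_eq //; exact: sel_inj.
Qed.

Lemma sel_coord n (P : 'M[C]_n) (I : {set 'I_n}) (x : 'rV[C]_n) :
  P \is unitarymx -> (x <= rowsub (sel I) P)%MS ->
  forall k, k \notin I -> (x *m P^t*) 0 k = 0.
Proof.
move=> uP /submxP [c ->] k kI.
rewrite -mulmxA mul_rowsub_mx unitary_tr // mxE big1 // => a _.
rewrite !mxE; case: eqP => [e|]; last by rewrite mulr0.
by move: kI; rewrite -e sel_in.
Qed.

Lemma qf_lb n (P : 'M[C]_n) (X : 'rV[C]_n) (I : {set 'I_n}) (x : 'rV[C]_n) t :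
  P \is unitarymx -> (forall k, k \in I -> t <= X 0 k) ->
  (x <= rowsub (sel I) P)%MS ->
  t * qf 1%:M x <= qf (invmx P *m diag_mx X *m P) x.
Proof.
move=> uP hX hx; rewrite qf_diag // (qf1_diag x uP) mulr_sumr.
apply: ler_sum => k _; case: (boolP (k \in I)) => kI.
  by rewrite mulrC ler_wpM2l ?exprn_ge0 ?normr_ge0 ?hX.
by rewrite (sel_coord uP hx kI) normr0 expr0n /= !mul0r mulr0.
Qed.

Lemma qf_ub n (P : 'M[C]_n) (X : 'rV[C]_n) (I : {set 'I_n}) (x : 'rV[C]_n) t :
  P \is unitarymx -> (forall k, k \in I -> X 0 k <= t) ->
  (x <= rowsub (sel I) P)%MS ->
  qf (invmx P *m diag_mx X *m P) x <= t * qf 1%:M x.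
Proof.
move=> uP hX hx; rewrite qf_diag // (qf1_diag x uP) mulr_sumr.
apply: ler_sum => k _; case: (boolP (k \in I)) => kI.
  by rewrite [t * _]mulrC ler_wpM2l ?exprn_ge0 ?normr_ge0 ?hX.
by rewrite (sel_coord uP hx kI) normr0 expr0n /= !mul0r mulr0.
Qed.


Lemma card_count n (T : Type) (f : 'I_n -> T) (p : pred T) :
  #|[set k | p (f k)]| = count p [seq f k | k <- enum 'I_n].
Proof.
rewrite count_map cardsE cardE /enum_mem size_filter /=.
by rewrite filter_predT; apply: eq_count => x.
Qed.

Lemma spec_perm n (M : 'M[C]_n) (lam : 'I_n -> C) :
  M \is normalmx -> char_poly M = \prod_(k < n) ('X - (lam k)%:P) ->
  perm_eq [seq spectral_diag M 0 k | k <- enum 'I_n] [seq lam k | k <- enum 'I_n].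
Proof.
move=> /orthomx_spectralP hM hc; apply: prod_XsubC_eq.
rewrite !big_map.
have E (F : 'I_n -> {poly C}) : \prod_(j <- Finite.enum 'I_n) F j = \prod_(k < n) F k.
  by rewrite /index_enum; unlock.
rewrite !E -hc {2}hM char_poly_sim; last first.
- exact: mulmxV (spectral_unit M).
- exact: mulVmx (spectral_unit M).
rewrite char_poly_trig ?diag_mx_is_trig //; apply: eq_bigr => k _.
by rewrite mxE eqxx mulr1n.
Qed.


Lemma weyl n (M N : 'M[C]_n) (lam mu : 'I_n -> C) (c : C) (l : 'I_n) :
  M \is normalmx -> N \is normalmx ->
  (forall k l : 'I_n, (k <= l)%N -> lam l <= lam k) ->
  (forall k l : 'I_n, (k <= l)%N -> mu l <= mu k) ->
  char_poly M = \prod_(k < n) ('X - (lam k)%:P) ->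
  char_poly N = \prod_(k < n) ('X - (mu k)%:P) ->
  (forall x, qf M x + c * qf 1%:M x <= qf N x) ->
  lam l + c <= mu l.
Proof.
move=> nM nN slam smu cM cN hq.
have /orthomx_spectralP hM := nM; have /orthomx_spectralP hN := nN.
have uP := spectral_unitarymx M; have uQ := spectral_unitarymx N.
set P := spectralmx M in hM uP; set X := spectral_diag M in hM.
set Q := spectralmx N in hN uQ; set Y := spectral_diag N in hN.
set IU := [set k | lam l <= X 0 k].
set IW := [set k | Y 0 k <= mu l].
have cU : #|IU| = #|[set k | lam l <= lam k]|.
  by rewrite /IU (card_count (fun k => X 0 k) (fun z => lam l <= z)) (card_count lam (fun z => lam l <= z)); move/permP: (spec_perm nM cM) => ->.
have cW : #|IW| = #|[set k | mu k <= mu l]|.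
  by rewrite /IW (card_count (fun k => Y 0 k) (fun z => z <= mu l)) (card_count mu (fun z => z <= mu l)); move/permP: (spec_perm nN cN) => ->.
have big : (n < #|IU| + #|IW|)%N.
  rewrite cU cW.
  have h1 : [set k : 'I_n | (k <= l)%N] \subset [set k | lam l <= lam k].
    by apply/subsetP => k; rewrite !inE => /slam.
  have h2 : [set k : 'I_n | (l <= k)%N] \subset [set k | mu k <= mu l].
    by apply/subsetP => k; rewrite !inE => /smu.
  apply: (leq_trans _ (leq_add (subset_leq_card h1) (subset_leq_card h2))).
  rewrite -cardsUI.
  have -> : [set k : 'I_n | (k <= l)%N] :|: [set k : 'I_n | (l <= k)%N] = setT.
    by apply/setP => k; rewrite !inE leq_total.
  rewrite cardsT card_ord -[X in (X < _)%N]addn0 ltn_add2l card_gt0.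
  by apply/set0Pn; exists l; rewrite !inE leqnn.
set U := rowsub (sel IU) P; set W := rowsub (sel IW) Q.
have rk : (0 < \rank (U :&: W))%N.
  have := mxrank_sum_cap U W; rewrite !rank_sel //.
  have := rank_leq_col (U + W)%MS => a b.
  by rewrite -(ltn_add2l (\rank (U + W)%MS)) addn0 b (leq_ltn_trans a big).
set x := nz_row (U :&: W)%MS.
have x0 : x != 0 by rewrite nz_row_eq0 -mxrank_eq0 -lt0n.
have xU : (x <= U)%MS := submx_trans (nz_row_sub _) (capmxSl _ _).
have xW : (x <= W)%MS := submx_trans (nz_row_sub _) (capmxSr _ _).
have h1 : lam l * qf 1%:M x <= qf M x.
  by rewrite [in qf M x]hM; apply: qf_lb xU => // k; rewrite inE.
have h2 : qf N x <= mu l * qf 1%:M x.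
  by rewrite [in qf N x]hN; apply: qf_ub xW => // k; rewrite inE.
have pos : 0 < qf 1%:M x by rewrite qf1E dotmx_is_dotmx.
rewrite -(ler_pM2r pos) mulrDl.
apply: (le_trans _ h2); apply: (le_trans _ (hq x)).
by rewrite lerD2r.
Qed.

End Weyl.
Lemma mxDE (V : nmodType) m n (A B : 'M[V]_(m,n)) i j : (A + B) i j = A i j + B i j.
Proof. by rewrite !mxE. Qed.
Lemma mxBE (V : zmodType) m n (A B : 'M[V]_(m,n)) i j : (A - B) i j = A i j - B i j.
Proof. by rewrite !mxE. Qed.
Lemma mxZE (V : pzRingType) m n (a : V) (A : 'M[V]_(m,n)) i j : (a *: A) i j = a * A i j.
Proof. by rewrite !mxE. Qed.
Lemma mapE (U V : Type) (f : U -> V) m n (A : 'M[U]_(m,n)) i j : (map_mx f A) i j = f (A i j).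
Proof. by rewrite !mxE. Qed.
Lemma trE (U : Type) m n (A : 'M[U]_(m,n)) i j : A^T i j = A j i.
Proof. by rewrite !mxE. Qed.

Section Complexify.
Variable R : realType.
Local Notation cR := (real_complex R).

Lemma cR_real (x : R) : cR x \is Num.real.
Proof. by apply/complex_realP; exists x. Qed.

Lemma conj_cR (x : R) : Num.conj (cR x) = cR x.
Proof. exact: conj_Creal (cR_real x). Qed.

Lemma cR_ge0 (x : R) : 0 <= x -> 0 <= cR x.
Proof. by move=> hx; rewrite -(rmorph0 cR) lecR. Qed.

Lemma cmx_tc m k (B : 'M[R]_(m, k)) : (map_mx cR B)^t* = map_mx cR B^T.
Proof. by apply/matrixP => a b; rewrite !mxE conj_cR. Qed.

Lemma cmx_normal n (S : 'M[R]_n) : S^T = S -> map_mx cR S \is normalmx.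
Proof. by move=> hS; rewrite qualifE cmx_tc hS. Qed.

Lemma qf_rank1 n (S : 'M[R]_n) (u : 'cV[R]_n) (a : R) (x : 'rV[R[i]]_n) :
  qf (map_mx cR (S + a *: (u *m u^T))) x =
  qf (map_mx cR S) x + cR a * `|(x *m map_mx cR u) 0 0| ^+ 2.
Proof.
rewrite map_mxD map_mxZ map_mxM /qf mulmxDr mulmxDl mxDE.
congr (_ + _).
rewrite -scalemxAr -scalemxAl mxZE; congr (_ * _).
have E : map_mx cR u^T *m x^t* = (x *m map_mx cR u)^t*.
  by rewrite trmx_mul map_mxM cmx_tc.
have E2 : x *m (map_mx cR u *m map_mx cR u^T) *m x^t* =
    (x *m map_mx cR u) *m (map_mx cR u^T *m x^t*) by rewrite !mulmxA.
rewrite E2 E mxE big_ord1 mapE normCK; congr (_ * Num.conj _); exact: trE.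
Qed.

Lemma key (xi xj : R[i]) (si sj : R) (q : R[i]) : 0 <= si -> 0 <= sj ->
  `|xi| ^+ 2 + `|xj| ^+ 2 <= q ->
  `|xi * cR si - xj * cR sj| ^+ 2 <= cR (si ^+ 2 + sj ^+ 2) * q.
Proof.
move=> hi hj hq.
have s0i := cR_ge0 hi; have s0j := cR_ge0 hj.
set a1 := `|xi|; set b1 := `|xj|.
have t1 : `|xi * cR si - xj * cR sj| <= a1 * cR si + b1 * cR sj.
  by rewrite (le_trans (ler_normB _ _)) // !normrM !(ger0_norm s0i) !(ger0_norm s0j).
have t2 : `|xi * cR si - xj * cR sj| ^+ 2 <= (a1 * cR si + b1 * cR sj) ^+ 2.
  by rewrite !expr2 ler_pM ?normr_ge0.
have t3 : (a1 * cR si + b1 * cR sj) ^+ 2 <= cR (si ^+ 2 + sj ^+ 2) * (a1 ^+ 2 + b1 ^+ 2).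
  rewrite -subr_ge0.
  have -> : cR (si ^+ 2 + sj ^+ 2) * (a1 ^+ 2 + b1 ^+ 2) - (a1 * cR si + b1 * cR sj) ^+ 2
     = (a1 * cR sj - b1 * cR si) ^+ 2.
    rewrite rmorphD !rmorphXn /=; ring.
  rewrite -real_normK ?exprn_ge0 ?normr_ge0 //.
  by rewrite rpredB ?rpredM ?normr_real ?cR_real.
have t4 : cR (si ^+ 2 + sj ^+ 2) * (a1 ^+ 2 + b1 ^+ 2) <= cR (si ^+ 2 + sj ^+ 2) * q.
  by rewrite ler_wpM2l // cR_ge0 // addr_ge0 ?exprn_ge0.
exact: le_trans t2 (le_trans t3 t4).
Qed.

Lemma mul_delta_col n (y : 'rV[R[i]]_n) (i : 'I_n) :
  (y *m map_mx cR (delta_mx i (0 : 'I_1))) 0 0 = y 0 i.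
Proof.
rewrite mxE (bigD1 i) //= big1 ?addr0 => [|k /negbTE nk].
  by rewrite !mxE eqxx /= rmorph1 mulr1.
by rewrite !mxE nk /= rmorph0 mulr0.
Qed.

Lemma w_entry n (s : 'rV[R]_n) (i j : 'I_n) (x : 'rV[R[i]]_n) :
  (x *m map_mx cR (diag_mx s *m (delta_mx i (0 : 'I_1) - delta_mx j (0 : 'I_1)))) 0 0 =
  x 0 i * cR (s 0 i) - x 0 j * cR (s 0 j).
Proof.
rewrite map_mxM map_mxB map_diag_mx mulmxA mulmxBr mxBE.
by rewrite !mul_delta_col !mul_mx_diag !mxE.
Qed.

Lemma q1_ge n (x : 'rV[R[i]]_n) (i j : 'I_n) : i != j ->
  `|x 0 i| ^+ 2 + `|x 0 j| ^+ 2 <= qf 1%:M x.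
Proof.
move=> ij; rewrite /qf mulmx1 mxE (bigD1 i) //= (bigD1 j) 1?eq_sym //=.
rewrite !mapE !trE -!normCK addrA lerDl sumr_ge0 // => k _.
by rewrite mapE trE -normCK exprn_ge0 ?normr_ge0.
Qed.

End Complexify.

Unset Implicit Arguments.

Theorem mainTheorem5 (R : realType) (n : nat) (A : 'M[R]_n) (i j : 'I_n)
  (lam lamh : 'I_n -> R) :
  A^T = A ->
  (forall k l, 0 <= A k l) ->
  (forall k, 0 < degvec A k 0) ->
  graph_connected A ->
  i != j ->
  0 < A i j ->
  let v := evec R i - evec R j in
  let Ah := A + A i j *: (v *m v^T) in
  let d := degvec A in
  eigenvalues_desc (invmx (degmx A) *m A) lam ->
  eigenvalues_desc (invmx (degmx A) *m Ah) lamh ->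
  forall l : 'I_n,
    lam l <= lamh l /\
    lamh l <= lam l + A i j * ((d i 0)^-1 + (d j 0)^-1).
Proof.
move=> hsym hnn hd0 _ ij haij v Ah d [slam clam] [slamh clamh] l.
have hd k : 0 < d k 0 := hd0 k.
have hD : degmx A = diag_mx d^T := erefl.
clearbody d.
pose s : 'rV[R]_n := \row_k Num.sqrt ((d k 0)^-1).
pose r : 'rV[R]_n := \row_k Num.sqrt (d k 0).
pose T := diag_mx s; pose Ti := diag_mx r.
have dk0 k : 0 <= d k 0 := ltW (hd k).
have TTi : T *m Ti = 1%:M.
  rewrite mulmx_diag -diag_const_mx; congr diag_mx; apply/rowP => k.
  by rewrite !mxE -sqrtrM ?invr_ge0 // mulVf ?gt_eqF ?hd // sqrtr1.
have TiT : Ti *m T = 1%:M by rewrite diag_mxC.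
have TTD : T *m T *m degmx A = 1%:M.
  rewrite hD !mulmx_diag -diag_const_mx; congr diag_mx; apply/rowP => k.
  by rewrite !mxE -expr2 sqr_sqrtr ?invr_ge0 // mulVf ?gt_eqF ?hd.
have TT : invmx (degmx A) = T *m T.
  have [_ uD] := mulmx1_unit TTD.
  by rewrite -[RHS]mulmx1 -(mulmxV uD) mulmxA TTD mul1mx.
pose S := T *m A *m T.
pose SS := T *m Ah *m T.
pose w := T *m v.
have hSh : SS = S + A i j *: (w *m w^T).
  rewrite /SS /Ah mulmxDr mulmxDl /S; congr (_ + _).
  by rewrite -scalemxAr -scalemxAl /w trmx_mul tr_diag_mx !mulmxA.
have cS : char_poly S = \prod_(k < n) ('X - (lam k)%:P).
  rewrite -clam TT -(char_poly_sim S TTi TiT) /S.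
  by rewrite !mulmxA -(mulmxA _ T Ti) TTi mulmx1.
have cSS : char_poly SS = \prod_(k < n) ('X - (lamh k)%:P).
  rewrite -clamh TT -(char_poly_sim SS TTi TiT) /SS.
  by rewrite !mulmxA -(mulmxA _ T Ti) TTi mulmx1.
have symS : S^T = S by rewrite /S !trmx_mul tr_diag_mx hsym mulmxA.
have symAh : Ah^T = Ah by rewrite /Ah linearD linearZ /= trmx_mul trmxK hsym.
have symSS : SS^T = SS by rewrite /SS !trmx_mul tr_diag_mx symAh mulmxA.
have cMS : char_poly (map_mx (real_complex R) S) =
    \prod_(k < n) ('X - (real_complex R (lam k))%:P).
  by rewrite -map_char_poly cS map_prod_XsubC.
have cMSS : char_poly (map_mx (real_complex R) SS) =
    \prod_(k < n) ('X - (real_complex R (lamh k))%:P).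
  by rewrite -map_char_poly cSS map_prod_XsubC.
have slamC : forall k l : 'I_n, (k <= l)%N ->
    real_complex R (lam l) <= real_complex R (lam k).
  by move=> k l' /slam; rewrite lecR.
have slamhC : forall k l : 'I_n, (k <= l)%N ->
    real_complex R (lamh l) <= real_complex R (lamh k).
  by move=> k l' /slamh; rewrite lecR.
have a0 : 0 <= A i j := ltW haij.
split.
  have := weyl l (cmx_normal symS) (cmx_normal symSS) slamC slamhC cMS cMSS
    (c := 0) _.
  rewrite addr0 lecR; apply => x.
  rewrite hSh qf_rank1 mul0r addr0 lerDl.
  by rewrite mulr_ge0 ?exprn_ge0 ?normr_ge0 ?cR_ge0.
have si0 k : 0 <= s 0 k by rewrite mxE sqrtr_ge0.
have hk : A i j * ((d i 0)^-1 + (d j 0)^-1) = A i j * (s 0 i ^+ 2 + s 0 j ^+ 2).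
  by rewrite !mxE !sqr_sqrtr ?invr_ge0.
have := weyl l (cmx_normal symSS) (cmx_normal symS) slamhC slamC cMSS cMS
    (c := real_complex R (- (A i j * ((d i 0)^-1 + (d j 0)^-1)))) _.
rewrite -rmorphD => H; rewrite -lerBlDr -lecR; apply: H => x.
rewrite hSh qf_rank1 -addrA gerDl rmorphN mulNr subr_le0.
rewrite hk rmorphM -mulrA ler_wpM2l ?cR_ge0 // /w /v /evec w_entry.
by apply: key; rewrite ?si0 ?q1_ge.
Qed.
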